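(* Let $A$ and $B$ be independent and identically distributed real random variables with $\mathbb{E}[A]=0$ and $\operatorname{Var}(A)=1$. Then \[ \mathbb{E}\big[|A^2-B^2|\big]+4\,\big(\mathbb{E}\big[|A-B|\big]\big)^2\;\ge\;2 . \] *)

(* Defs.v *)
From mathcomp Require Import all_boot all_order all_algebra.
From mathcomp Require Import all_classical all_reals all_analysis.
Set Implicit Arguments.
Unset Strict Implicit.
Unset Printing Implicit Defensive.
Import Order.TTheory GRing.Theory Num.Theory.
Local Open Scope classical_set_scope.
Local Open Scope ring_scope.
Local Open Scope ereal_scope.

Definition indep_RV2 d (T : measurableType d) (R : realType)
  (P : probability T R) (A B : {RV P >-> R}) : Prop :=
  forall S1 S2 : set R, measurable S1 -> measurable S2 ->
    P (A @^-1` S1 `&` B @^-1` S2) = P (A @^-1` S1) * P (B @^-1` S2).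

Definition ident_distr d (T : measurableType d) (R : realType)
  (P : probability T R) (A B : {RV P >-> R}) : Prop :=
  forall S : set R, measurable S -> distribution P A S = distribution P B S.

(* Main.v *)
Require Import Defs.
From mathcomp Require Import all_boot all_order all_algebra.
From mathcomp Require Import all_classical all_reals all_analysis.
From mathcomp Require Import finmap measurable_realfun.
From mathcomp Require Import ring lra.
Import Order.TTheory GRing.Theory Num.Theory.
Local Open Scope classical_set_scope.
Local Open Scope ring_scope.
Local Open Scope ereal_scope.
Import HBNNSimple.

Lemma indic_ge0' (R : realType) (U : Type) (A : set U) (x : U) : (0 <= \1_A x :> R)%R.
Proof. by rewrite indicE ler0n. Qed.

Lemma ge0M (R : realType) (a b : R) : (0 <= a)%R -> (0 <= b)%R -> 0 <= a%:E * b%:E.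
Proof. by move=> ? ?; rewrite -EFinM lee_fin mulr_ge0. Qed.

Section G.
Context d (T : measurableType d) (R : realType) (P : probability T R).

Lemma step (X : T -> R) (mX : measurable_fun setT X) (h : T -> R)
  (mh : measurable_fun setT h) (h0 : forall x, (0 <= h x)%R) (s : {nnsfun R >-> R}) :
 \int[P]_x ((s (X x))%:E * (h x)%:E) =
 \sum_(y <- fset_set (range s)) (`|y|%:E * \int[P]_x ((\1_(s @^-1` [set y]) (X x))%:E * (h x)%:E)).
Proof.
have mi : forall r, measurable_fun setT
    ((fun x => (\1_(s @^-1` [set r]) (X x))%:E * (h x)%:E) : T -> \bar R).
  move=> r.
  rewrite (_ : (fun x => (\1_(s @^-1` [set r]) (X x))%:E * (h x)%:E) = EFin \o (fun x => \1_(s @^-1` [set r]) (X x) * h x)%R);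
    last by apply/funext => x; rewrite /= EFinM.
  apply/measurable_EFinP; apply: measurable_funM => //.
  apply: measurableT_comp => //; apply: measurable_indic.
transitivity (\int[P]_x (\sum_(y <- fset_set (range s))
   (`|y|%:E * ((\1_(s @^-1` [set y]) (X x))%:E * (h x)%:E)))).
  apply: eq_integral => x _.
  rewrite -EFinM fimfunE fsbig_finite // big_distrl /= sumEFin.
  congr EFin; apply: eq_big_seq => y; rewrite in_fset_set // in_setE => -[z _ <-].
  by rewrite ger0_norm // mulrA.
rewrite ge0_integral_sum //.
- apply: eq_bigr => y _; rewrite ge0_integralZl_EFin //.
  by move=> x _; apply: ge0M => //; apply: indic_ge0'.
- by move=> r /=; apply: measurable_funeM.
- by move=> y x _; apply: mule_ge0; rewrite ?lee_fin //; apply: ge0M => //; apply: indic_ge0'.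
Qed.

Lemma G0 (X : T -> R) (mX : measurable_fun setT X) (h1 h2 : T -> R)
  (mh1 : measurable_fun setT h1) (h10 : forall x, (0 <= h1 x)%R)
  (mh2 : measurable_fun setT h2) (h20 : forall x, (0 <= h2 x)%R)
  (H12 : forall S, measurable S ->
     \int[P]_x ((\1_S (X x))%:E * (h1 x)%:E) = \int[P]_x ((\1_S (X x))%:E * (h2 x)%:E))
  (f : R -> R) (mf : measurable_fun setT f) (f0 : forall r, (0 <= f r)%R) :
  \int[P]_x ((f (X x))%:E * (h1 x)%:E) = \int[P]_x ((f (X x))%:E * (h2 x)%:E).
Proof.
have mf' : measurable_fun setT (EFin \o f) by apply/measurable_EFinP.
pose fn := nnsfun_approx measurableT mf'.
have lim_i : forall h : T -> R, measurable_fun setT h -> (forall x, (0 <= h x)%R) ->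
   \int[P]_x ((f (X x))%:E * (h x)%:E) =
   limn (fun n => \int[P]_x ((fn n (X x))%:E * (h x)%:E)).
  move=> h mh h0.
  rewrite -(monotone_convergence P measurableT (g' := fun n x => (fn n (X x))%:E * (h x)%:E)).
  - apply: eq_integral => x _; apply/esym/cvg_lim => //.
    apply: cvgeZr => //.
    exact: (cvg_nnsfun_approx measurableT mf' (fun r _ => f0 r : (0 <= (EFin \o f) r)%E)).
  - move=> n /=; apply: emeasurable_funM; apply/measurable_EFinP => //.
    by apply: measurableT_comp => //.
  - by move=> n x _; apply: ge0M.
  - move=> x _ m n mn; rewrite -!EFinM lee_fin; apply: ler_pM => //.
    by have /lefP := nd_nnsfun_approx measurableT mf' mn; apply.
rewrite !lim_i //; congr (limn _); apply/funext => n.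
by rewrite !step //; apply: eq_bigr => y _; rewrite H12 //.
Qed.

Lemma indic_pre (X : T -> R) (S : set R) x : \1_S (X x) = \1_(X @^-1` S) x :> R.
Proof. by rewrite !indicE. Qed.

Lemma indicM' (U : Type) (E1 E2 : set U) x : (\1_E1 x * \1_E2 x = \1_(E1 `&` E2) x :> R)%R.
Proof. by rewrite indicI. Qed.

Lemma int_indic_c (E : set T) (c : R) : measurable E -> (0 <= c)%R ->
  \int[P]_x ((\1_E x)%:E * c%:E) = P E * c%:E.
Proof.
move=> mE c0; rewrite ge0_integralZr //.
- by rewrite integral_indic // setIT.
- by apply/measurable_EFinP; apply: measurable_indic.
Qed.

Lemma prodE (A B : T -> R) (mA : measurable_fun setT A) (mB : measurable_fun setT B)
  (ind : forall S1 S2 : set R, measurable S1 -> measurable S2 ->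
     P (A @^-1` S1 `&` B @^-1` S2) = P (A @^-1` S1) * P (B @^-1` S2))
  (f g : R -> R) (mf : measurable_fun setT f) (mg : measurable_fun setT g)
  (f0 : forall r, (0 <= f r)%R) (g0 : forall r, (0 <= g r)%R)
  (gfin : \int[P]_x (g (B x))%:E < +oo) :
  \int[P]_x ((f (A x))%:E * (g (B x))%:E) =
  \int[P]_x (f (A x))%:E * \int[P]_x (g (B x))%:E.
Proof.
have mpre : forall (X : T -> R), measurable_fun setT X -> forall S, measurable S ->
    measurable (X @^-1` S).
  by move=> X mX S mS; rewrite -[X @^-1` S]setTI; apply: mX.
have gge0 : 0 <= \int[P]_x (g (B x))%:E.
  by apply: integral_ge0 => x _; rewrite lee_fin.
set c := fine (\int[P]_x (g (B x))%:E).
have c0 : (0 <= c)%R by apply: fine_ge0.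
have cE : \int[P]_x (g (B x))%:E = c%:E by rewrite fineK // ge0_fin_numE.
have mgB : measurable_fun setT (fun x => g (B x)) by apply: measurableT_comp.
have mfA : measurable_fun setT (fun x => f (A x)) by apply: measurableT_comp.
have st1 : forall S, measurable S ->
  \int[P]_x ((\1_S (A x))%:E * (g (B x))%:E) =
  \int[P]_x ((\1_S (A x))%:E * (cst c x)%:E).
  move=> S mS.
  set pA := fine (P (A @^-1` S)).
  have pA0 : (0 <= pA)%R by apply: fine_ge0.
  have pAE : P (A @^-1` S) = pA%:E by rewrite fineK // fin_num_measure //; apply: mpre.
  have mhA : measurable_fun setT (fun x => \1_S (A x) : R).
    by apply: measurableT_comp => //; apply: measurable_indic.
  have HH : forall S2, measurable S2 ->
     \int[P]_x ((\1_S2 (B x))%:E * ((fun x => \1_S (A x)) x)%:E) =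
     \int[P]_x ((\1_S2 (B x))%:E * (cst pA x)%:E).
    move=> S2 mS2 /=.
    under eq_integral do rewrite -EFinM indic_pre (indic_pre A) indicM'.
    under [RHS]eq_integral do rewrite indic_pre.
    rewrite integral_indic //; last by apply: measurableI; apply: mpre.
    rewrite int_indic_c //; last exact: mpre.
    rewrite setIT setIC; etransitivity; first exact: ind.
    by rewrite pAE muleC.
  under eq_integral do rewrite muleC.
  rewrite (@G0 B mB (fun x => \1_S (A x)) (cst pA) mhA (fun x => indic_ge0' _ _ _ _)
     (measurable_cst _) (fun _ => pA0) HH g mg g0).
  rewrite /= ge0_integralZr //; first last.
  - by move=> x _; rewrite lee_fin.
  - by apply/measurable_EFinP.
  under [RHS]eq_integral do rewrite indic_pre.
  rewrite int_indic_c //; last exact: mpre.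
  by rewrite pAE cE -!EFinM mulrC.
have := @G0 A mA (fun x => g (B x)) (cst c) mgB (fun x => g0 _) (measurable_cst _) (fun _ => c0) st1 f mf f0.
move=> ->; rewrite /= ge0_integralZr //.
- by rewrite cE.
- by apply/measurable_EFinP.
- by move=> x _; rewrite lee_fin.
Qed.

Lemma transfer (A B : T -> R) (mA : measurable_fun setT A) (mB : measurable_fun setT B)
  (idd : forall S, measurable S -> P (A @^-1` S) = P (B @^-1` S))
  (g : R -> R) (mg : measurable_fun setT g) (g0 : forall r, (0 <= g r)%R) :
  \int[P]_x (g (B x))%:E = \int[P]_x (g (A x))%:E.
Proof.
have mg' : measurable_fun setT (EFin \o g) by apply/measurable_EFinP.
have g0' : {in setT, forall y, 0 <= (EFin \o g) y} by move=> y _; rewrite /= lee_fin.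
have hB := ge0_integral_pushforward mB P measurableT mg' g0'.
have hA := ge0_integral_pushforward mA P measurableT mg' g0'.
rewrite preimage_setT in hA hB.
rewrite [LHS](_ : _ = \int[P]_(x in setT) ((EFin \o g) \o B) x) //.
rewrite [RHS](_ : _ = \int[P]_(x in setT) ((EFin \o g) \o A) x) //.
rewrite -hA -hB; apply: eq_measure_integral => S mS _.
by rewrite /pushforward; symmetry; apply: idd.
Qed.


Local Open Scope ring_scope.
Lemma absle (r : R) : (`|r| <= 1 + r ^+ 2)%R.
Proof.
have [r0|r0] := leP 0%R r; [rewrite ger0_norm // | rewrite ltr0_norm //]; nra.
Qed.

Lemma sq_ineq (a b : R) :
  (a ^+ 2 + b ^+ 2 <= `|a ^+ 2 - b ^+ 2| + 2 * (`|a| * `|b|))%R.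
Proof.
rewrite -(real_normK (num_real a)) -(real_normK (num_real b)).
have := normr_ge0 a; have := normr_ge0 b.
move: (`|a|)%R (`|b|)%R => u v u0 v0.
have [uv|uv] := leP u v.
- rewrite ler0_norm; last by rewrite subr_le0 ler_sqr //; nra.
  nra.
- rewrite ger0_norm; last by rewrite subr_ge0 ler_sqr //; nra.
  nra.
Qed.

Definition pp (r : R) : R := Num.max r 0%R.
Definition nn (r : R) : R := Num.max (- r)%R 0%R.

Lemma pp_ge0 r : (0 <= pp r)%R.
Proof. by rewrite /pp le_max lexx orbT. Qed.
Lemma nn_ge0 r : (0 <= nn r)%R.
Proof. by rewrite /nn le_max lexx orbT. Qed.
Lemma pp_le r : (pp r <= `|r|)%R.
Proof. by rewrite /pp ge_max normr_ge0 ler_norm. Qed.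
Lemma nn_le r : (nn r <= `|r|)%R.
Proof. by rewrite /nn ge_max normr_ge0 -normrN ler_norm. Qed.
Lemma ppnn r : (pp r - nn r = r)%R.
Proof.
rewrite /pp /nn; have [r0|r0] := leP r 0%R.
+ by rewrite max_l ?oppr_ge0 // opprK add0r.
+ by rewrite max_r ?subr0 // oppr_le0 ltW.
Qed.
Lemma mpp : measurable_fun setT pp.
Proof.
rewrite (_ : pp = (fun r => r) \max (cst 0%R)); last by apply/funext.
by apply: measurable_maxr => //; exact: measurable_cst.
Qed.
Lemma mnn : measurable_fun setT nn.
Proof.
rewrite (_ : nn = (pp \- (fun r => r))%R); last first.
  by apply/funext => r /=; have := ppnn r; lra.
by apply: measurable_funB => //; exact: mpp.
Qed.

Lemma sign_ineq (a b : R) :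
  (`|a| + (\1_[set r : R | (0 < r)%R] a * nn b + \1_[set r : R | (r < 0)%R] a * pp b)
   <= `|a - b| + (\1_[set r : R | (0 < r)%R] a * pp b + \1_[set r : R | (r < 0)%R] a * nn b))%R.
Proof.
have E : pp b = nn b + b.
  rewrite /pp /nn; have [b0|b0] := leP b 0%R.
  + by rewrite max_l ?oppr_ge0 // addNr.
  + by rewrite max_r ?add0r // oppr_le0 ltW.
have n1 := ler_norm (a - b); have n2 := ler_norm (b - a); rewrite distrC in n2.
rewrite !indicE E.
have [a0|a0|a0] := ltgtP a 0%R.
- rewrite (mem_set (a0 : [set r : R | (r < 0)%R] a)) memNset /=; last by apply/negP; rewrite -leNgt ltW.
  rewrite ltr0_norm //; lra.
- rewrite (mem_set (a0 : [set r : R | (0 < r)%R] a)) memNset /=; last by apply/negP; rewrite -leNgt ltW.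
  rewrite gtr0_norm //; lra.
- rewrite a0 !memNset /= ?ltxx // normr0 sub0r normrN; have := normr_ge0 b; lra.
Qed.
Local Open Scope ereal_scope.

Lemma intD2 (f g : T -> R) (mf : measurable_fun setT f) (mg : measurable_fun setT g)
  (f0 : forall x, (0 <= f x)%R) (g0 : forall x, (0 <= g x)%R) :
  \int[P]_x ((f x + g x)%R)%:E = \int[P]_x (f x)%:E + \int[P]_x (g x)%:E.
Proof.
under eq_integral do rewrite EFinD.
rewrite ge0_integralD //.
- by move=> x _; rewrite lee_fin.
- by apply/measurable_EFinP.
- by move=> x _; rewrite lee_fin.
- by apply/measurable_EFinP.
Qed.

Lemma intle (f g : T -> R) (mf : measurable_fun setT f) (mg : measurable_fun setT g)
  (f0 : forall x, (0 <= f x)%R) (fg : forall x, (f x <= g x)%R) :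
  \int[P]_x (f x)%:E <= \int[P]_x (g x)%:E.
Proof.
apply: ge0_le_integral => //.
- by move=> x _; rewrite lee_fin.
- by apply/measurable_EFinP.
- by apply/measurable_EFinP.
- by move=> x _; rewrite lee_fin.
Qed.

Lemma int1 : \int[P]_x (1%:E : \bar R) = 1.
Proof. by rewrite integral_cst // mul1e; apply: probability_setT. Qed.

End G.
Arguments pp {R}. Arguments nn {R}. Arguments mpp {R}. Arguments mnn {R}.
Arguments pp_ge0 {R}. Arguments nn_ge0 {R}. Arguments pp_le {R}. Arguments nn_le {R}.
Arguments sign_ineq {R}.
Theorem mainTheorem1 (d : measure_display) (T : measurableType d)
  (R : realType) (P : probability T R) (A B : {RV P >-> R}) :
  indep_RV2 A B -> ident_distr A B ->
  'E_P[A] = 0%E -> 'V_P[A] = 1%E ->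
  (2%:E <= 'E_P[fun w => (`|A w ^+ 2 - B w ^+ 2|)%R]
           + 4%:E * ('E_P[fun w => (`|A w - B w|)%R] * 'E_P[fun w => (`|A w - B w|)%R]))%E.
Proof.
move=> ind idd EA VA.
have mA : measurable_fun setT A := measurable_funP A.
have mB : measurable_fun setT B := measurable_funP B.
have trans : forall g : R -> R, measurable_fun setT g -> (forall r, (0 <= g r)%R) ->
    \int[P]_x (g (B x))%:E = \int[P]_x (g (A x))%:E.
  by move=> g mg g0; apply: transfer => // S mS; apply: idd.
have E2 : \int[P]_x ((A x ^+ 2)%R)%:E = 1.
  move: VA; rewrite /variance covariance.unlock EA /= expectation.unlock => <-.
  apply: eq_integral => x _; congr EFin.
  by transitivity ((A x - 0) * (A x - 0))%R; first by rewrite subr0 expr2.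
have mnorm : measurable_fun setT (fun r : R => `|r|%R) by exact: normr_measurable.
have msq : measurable_fun setT (fun r : R => (r ^+ 2)%R) by exact: exprn_measurable.
have mAa : measurable_fun setT (fun x => `|A x|%R) := measurableT_comp mnorm mA.
have mBa : measurable_fun setT (fun x => `|B x|%R) := measurableT_comp mnorm mB.
have mA2 : measurable_fun setT (fun x => (A x ^+ 2)%R) := measurableT_comp msq mA.
have mB2 : measurable_fun setT (fun x => (B x ^+ 2)%R) := measurableT_comp msq mB.
have mAB : measurable_fun setT (fun x => `|A x - B x|%R).
  by apply: (measurableT_comp mnorm); apply: measurable_funB.
have mAB2 : measurable_fun setT (fun x => `|A x ^+ 2 - B x ^+ 2|%R).
  by apply: (measurableT_comp mnorm); apply: measurable_funB.
have mAaBa : measurable_fun setT (fun x => (`|A x| * `|B x|)%R).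
  by apply: measurable_funM.
have EB2 : \int[P]_x ((B x ^+ 2)%R)%:E = 1.
  rewrite -E2; apply: (trans (fun r => r ^+ 2)%R) => // r; exact: sqr_ge0.
set a := \int[P]_x (`|A x|%R)%:E.
have a0 : 0 <= a by apply: integral_ge0 => x _; rewrite lee_fin.
have EBa : \int[P]_x (`|B x|%R)%:E = a by exact: (trans _ mnorm (fun r => normr_ge0 r)).
have afin : a \is a fin_num.
  rewrite ge0_fin_numE //; apply: (@le_lt_trans _ _ (\int[P]_x ((1 + A x ^+ 2)%R)%:E)).
    apply: intle => //; first by apply: measurable_funD => //; exact: measurable_cst.
    move=> x; apply: (@absle R).
  rewrite intD2 //; last by move=> x; exact: sqr_ge0.
  by rewrite int1 E2 -EFinD ltry.
set X := \int[P]_x (`|A x ^+ 2 - B x ^+ 2|%R)%:E.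
set m := \int[P]_x (`|A x - B x|%R)%:E.
have X0 : 0 <= X by apply: integral_ge0 => x _; rewrite lee_fin.
have m0 : 0 <= m by apply: integral_ge0 => x _; rewrite lee_fin.
have Xfin : X \is a fin_num.
  rewrite ge0_fin_numE //; apply: (@le_lt_trans _ _ (\int[P]_x ((A x ^+ 2 + B x ^+ 2)%R)%:E)).
    apply: intle => //; first by apply: measurable_funD.
    move=> x; rewrite (le_trans (ler_normB _ _)) // !ger0_norm //; exact: sqr_ge0.
  rewrite intD2 //; try by move=> x; exact: sqr_ge0.
  by rewrite E2 EB2 -EFinD ltry.
have mfin : m \is a fin_num.
  rewrite ge0_fin_numE //; apply: (@le_lt_trans _ _ (\int[P]_x ((`|A x| + `|B x|)%R)%:E)).
    apply: intle => //; first by apply: measurable_funD.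
    by move=> x; exact: ler_normB.
  rewrite intD2 // EBa [X in X + _](_ : _ = a) //.
  by rewrite -(fineK afin) -EFinD ltry.
have pAB : \int[P]_x ((`|A x| * `|B x|)%R)%:E = a * a.
  under eq_integral do rewrite EFinM.
  rewrite (@prodE _ _ _ P A B mA mB ind _ _ mnorm mnorm (fun r => normr_ge0 r) (fun r => normr_ge0 r)).
    by rewrite EBa.
  by rewrite EBa -(fineK afin) ltry.
have I1 : 2%:E <= X + (a * a + a * a).
  have h := @intle _ _ _ P (fun x => (A x ^+ 2 + B x ^+ 2)%R)
     (fun x => (`|A x ^+ 2 - B x ^+ 2| + (`|A x| * `|B x| + `|A x| * `|B x|))%R).
  rewrite intD2 // in h; try by move=> x; exact: sqr_ge0.
  rewrite intD2 // in h; try by [move=> x; rewrite mulr_ge0 | apply: measurable_funD].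
  rewrite intD2 // in h; try by [move=> x; rewrite mulr_ge0 | apply: measurable_funD].
  rewrite E2 EB2 pAB -EFinD in h; apply: h.
  - by apply: measurable_funD.
  - by apply: measurable_funD => //; apply: measurable_funD.
  - by move=> x; rewrite addr_ge0 // sqr_ge0.
  - by move=> x; have := @sq_ineq _ (A x) (B x); lra.
have pr : forall f g : R -> R, measurable_fun setT f -> measurable_fun setT g ->
    (forall r, (0 <= f r)%R) -> (forall r, (0 <= g r)%R) ->
    \int[P]_x (g (B x))%:E < +oo ->
    \int[P]_x ((f (A x) * g (B x))%R)%:E = \int[P]_x (f (A x))%:E * \int[P]_x (g (B x))%:E.
  move=> f g mf mg f0 g0 gfin; under eq_integral do rewrite EFinM.
  exact: (@prodE _ _ _ P A B mA mB ind f g mf mg f0 g0 gfin).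
have I2 : a <= m.
  pose i1 := (\1_[set r : R | (0 < r)%R] : R -> R).
  pose i2 := (\1_[set r : R | (r < 0)%R] : R -> R).
  have mS1 : measurable [set r : R | (0 < r)%R].
    rewrite (_ : [set r : R | (0 < r)%R] = `]0%R, +oo[%classic); first exact: measurable_itv.
    by apply/seteqP; split => r /=; rewrite in_itv /= andbT.
  have mS2 : measurable [set r : R | (r < 0)%R].
    rewrite (_ : [set r : R | (r < 0)%R] = `]-oo, 0%R[%classic); first exact: measurable_itv.
    by apply/seteqP; split => r /=; rewrite in_itv /=.
  have mi1 : measurable_fun setT i1 by apply: measurable_indic.
  have mi2 : measurable_fun setT i2 by apply: measurable_indic.
  have i10 : forall r, (0 <= i1 r)%R by move=> r; apply: indic_ge0'.
  have i20 : forall r, (0 <= i2 r)%R by move=> r; apply: indic_ge0'.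
  have i11 : forall r, (i1 r <= 1)%R by move=> r; rewrite /i1 indicE; case: (_ \in _).
  have i21 : forall r, (i2 r <= 1)%R by move=> r; rewrite /i2 indicE; case: (_ \in _).
  have ufin : forall i : R -> R, measurable_fun setT i -> (forall r, (0 <= i r)%R) ->
      (forall r, (i r <= 1)%R) -> \int[P]_x (i (A x))%:E \is a fin_num.
    move=> i mi i0 i1'; rewrite ge0_fin_numE; last by apply: integral_ge0 => x _; rewrite lee_fin.
    apply: (@le_lt_trans _ _ (\int[P]_x (1%R)%:E)); last by rewrite int1 ltry.
    apply: intle => //; first exact: measurableT_comp.
  set k := \int[P]_x (pp (B x))%:E.
  set k' := \int[P]_x (nn (B x))%:E.
  have kA : k = \int[P]_x (pp (A x))%:E by exact: (trans pp mpp pp_ge0).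
  have kA' : k' = \int[P]_x (nn (A x))%:E by exact: (trans nn mnn nn_ge0).
  have kle : k <= a.
    rewrite kA; apply: intle => //; [exact: measurableT_comp mpp mA|move=> x; exact: pp_ge0|move=> x; exact: pp_le].
  have kle' : k' <= a.
    rewrite kA'; apply: intle => //; [exact: measurableT_comp mnn mA|move=> x; exact: nn_ge0|move=> x; exact: nn_le].
  have k0 : 0 <= k by apply: integral_ge0 => x _; rewrite lee_fin pp_ge0.
  have k0' : 0 <= k' by apply: integral_ge0 => x _; rewrite lee_fin nn_ge0.
  have kfin : k \is a fin_num by rewrite ge0_fin_numE // (le_lt_trans kle) // -(fineK afin) ltry.
  have kfin' : k' \is a fin_num by rewrite ge0_fin_numE // (le_lt_trans kle') // -(fineK afin) ltry.
  have kk : k = k'.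
    have : \int[P]_x (EFin \o A) x = 0 by rewrite -EA expectation.unlock.
    rewrite integralE funerpos funerneg.
    have -> : \int[P]_x (EFin \o (A : T -> R)^\+%R) x = k by rewrite kA.
    have -> : \int[P]_x (EFin \o (A : T -> R)^\-%R) x = k' by rewrite kA'.
    by move/eqP; rewrite sube_eq // add0e => /eqP.
  have mi1A := measurableT_comp mi1 mA.
  have mi2A := measurableT_comp mi2 mA.
  have mppB := measurableT_comp mpp mB.
  have mnnB := measurableT_comp mnn mB.
  have h : \int[P]_x ((`|A x| + (i1 (A x) * nn (B x) + i2 (A x) * pp (B x)))%R)%:E <=
           \int[P]_x ((`|A x - B x| + (i1 (A x) * pp (B x) + i2 (A x) * nn (B x)))%R)%:E.
    apply: intle.
    - by apply: measurable_funD => //; apply: measurable_funD => //; apply: measurable_funM.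
    - by apply: measurable_funD => //; apply: measurable_funD => //; apply: measurable_funM.
    - by move=> x; rewrite !addr_ge0 // mulr_ge0 // ?pp_ge0 ?nn_ge0.
    - by move=> x; exact: sign_ineq.
  have m1 : measurable_fun setT (fun x => (i1 (A x) * nn (B x))%R) := measurable_funM mi1A mnnB.
  have m2 : measurable_fun setT (fun x => (i2 (A x) * pp (B x))%R) := measurable_funM mi2A mppB.
  have m3 : measurable_fun setT (fun x => (i1 (A x) * pp (B x))%R) := measurable_funM mi1A mppB.
  have m4 : measurable_fun setT (fun x => (i2 (A x) * nn (B x))%R) := measurable_funM mi2A mnnB.
  have m12 := measurable_funD m1 m2.
  have m34 := measurable_funD m3 m4.
  have p1 : forall x, (0 <= i1 (A x) * nn (B x))%R by move=> x; rewrite mulr_ge0 // nn_ge0.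
  have p2 : forall x, (0 <= i2 (A x) * pp (B x))%R by move=> x; rewrite mulr_ge0 // pp_ge0.
  have p3 : forall x, (0 <= i1 (A x) * pp (B x))%R by move=> x; rewrite mulr_ge0 // pp_ge0.
  have p4 : forall x, (0 <= i2 (A x) * nn (B x))%R by move=> x; rewrite mulr_ge0 // nn_ge0.
  have p12 : forall x, (0 <= i1 (A x) * nn (B x) + i2 (A x) * pp (B x))%R.
    by move=> x; rewrite addr_ge0.
  have p34 : forall x, (0 <= i1 (A x) * pp (B x) + i2 (A x) * nn (B x))%R.
    by move=> x; rewrite addr_ge0.
  have pa : forall x, (0 <= `|A x|)%R by move=> x.
  have pab : forall x, (0 <= `|A x - B x|)%R by move=> x.
  have mpp' := @mpp R. have mnn' := @mnn R.
  have pp0 := @pp_ge0 R. have nn0 := @nn_ge0 R.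
  have klt : k < +oo by rewrite -ge0_fin_numE.
  have klt' : k' < +oo by rewrite -ge0_fin_numE.
  rewrite intD2 // intD2 // in h.
  rewrite intD2 // intD2 // in h.
  rewrite (pr i1 nn) // (pr i2 pp) // (pr i1 pp) // (pr i2 nn) // in h.
  move: h; rewrite (_ : \int[P]_x (nn (B x))%:E = k') // (_ : \int[P]_x (pp (B x))%:E = k) // -kk.
  have u1f : \int[P]_x (i1 (A x))%:E \is a fin_num by apply: ufin.
  have u2f : \int[P]_x (i2 (A x))%:E \is a fin_num by apply: ufin.
  by rewrite leeD2rE // fin_numD !fin_numM.
rewrite !expectation.unlock -/X -/m.
move: I1 I2 a0; rewrite -(fineK afin) -(fineK Xfin) -(fineK mfin).
rewrite -!EFinM -!EFinD !lee_fin.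
nra.
Qed.
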